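(* For every integer $n>61$ there is no balanced permutation sequence of length $n$. In particular, only finitely many positive integers $n$ admit a balanced permutation sequence of length $n$.
   Context: Let $n$ be a positive integer, $N$ a set of $n$ players and $[n]=\{1,\ldots,n\}$ a set of $n$ items. A permutation sequence of length $n$ is an ordered tuple $(\pi_1,\ldots,\pi_n)$ of bijections $\pi_t : N\to[n]$; on day $t$ player $i$ receives item $\pi_t(i)$. For $t\in[n]$ and $i\in N$, $Z_i^t$ is the multiset $\{\pi_1(i),\ldots,\pi_t(i)\}$, and for $j\in[t]$, $Z_i^t[j]$ is the $j$-th smallest element of $Z_i^t$ (counted with multiplicity). The sequence is called balanced if for every $t\in[n]$, every $i\in N$ and every $j\in[t]$: $Z_i^t[j]\le \lceil jn/t\rceil$. *)

(* Defs.v *)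
From mathcomp Require Import all_boot all_order all_fingroup.
Set Implicit Arguments. Unset Strict Implicit. Unset Printing Implicit Defensive.

(* Players N and items [n] = {1..n} are both encoded by 'I_n; the ordinal
   k : 'I_n stands for item k+1.  A permutation sequence of length n is a
   function from days 'I_n (day d stands for day d+1) to bijections
   {perm 'I_n}. *)
Definition perm_seq (n : nat) := 'I_n -> {perm 'I_n}.

Definition Z (n : nat) (pi : perm_seq n) (t : nat) (i : 'I_n) : seq nat :=
  map (fun d : 'I_n => (pi d i).+1) (filter (fun d : 'I_n => d < t) (enum 'I_n)).

Definition Zth (n : nat) (pi : perm_seq n) (t : nat) (i : 'I_n) (j : nat) : nat :=
  nth 0 (sort leq (Z pi t i)) j.-1.

Definition ceil_div (a b : nat) : nat := (a + b.-1) %/ b.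

Definition balanced (n : nat) (pi : perm_seq n) : Prop :=
  forall (t : nat), 1 <= t <= n ->
  forall (i : 'I_n) (j : nat), 1 <= j <= t ->
    Zth pi t i j <= ceil_div (j * n) t.

(* Main.v *)
Require Import Defs.
From mathcomp Require Import all_boot all_order all_fingroup.
From mathcomp Require Import zify.
Set Implicit Arguments. Unset Strict Implicit. Unset Printing Implicit Defensive.

Definition cnt (n : nat) (pi : perm_seq n) (i : 'I_n) (t V : nat) : nat :=
  \sum_(d : 'I_n) ((d < t) && (pi d i < V) : nat).

Lemma sum_lt n V : \sum_(x : 'I_n) ((x < V) : nat) = minn n V.
Proof.
elim: n => [|n IH]; first by rewrite big_ord0 min0n.
rewrite big_ord_recr /= IH; case: ltnP => h; lia.
Qed.

Lemma count_enum_sum n (q : pred 'I_n) :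
  count q (enum 'I_n) = \sum_(d : 'I_n) (q d : nat).
Proof.
rewrite -sum1_count big_enum_cond big_mkcond /=.
by apply: eq_bigr => d _; case: (q d).
Qed.

Lemma count_Z n (pi : perm_seq n) t i V :
  count (fun v => v <= V) (Defs.Z pi t i) = cnt pi i t V.
Proof.
rewrite /Defs.Z count_map count_filter count_enum_sum /cnt.
by apply: eq_bigr => d _ /=; rewrite andbC.
Qed.

Lemma cnt_all n (pi : perm_seq n) i t : t <= n -> cnt pi i t n = t.
Proof.
move=> ht; rewrite /cnt.
transitivity (\sum_(d : 'I_n) ((d < t) : nat)).
  by apply: eq_bigr => d _; rewrite ltn_ord andbT.
by rewrite sum_lt; lia.
Qed.

Lemma size_Z n (pi : perm_seq n) t i : t <= n -> size (Defs.Z pi t i) = t.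
Proof.
move=> ht; rewrite -[RHS](cnt_all pi i ht) -count_Z.
apply/esym/eqP; rewrite -all_count; apply/allP => v.
rewrite /Defs.Z => /mapP [d _ ->]; by rewrite ltn_ord.
Qed.

Lemma sorted_count (s : seq nat) j V :
  sorted leq s -> 0 < j <= size s -> nth 0 s j.-1 <= V ->
  j <= count (fun v => v <= V) s.
Proof.
move=> ss /andP [j0 js] hV.
rewrite -(cat_take_drop j s) count_cat.
have -> : count (fun v => v <= V) (take j s) = j.
  have : all (fun v => v <= V) (take j s).
    apply/(all_nthP 0) => k; rewrite size_take => hk.
    have hk' : k < j by move: hk; case: ifP => //; lia.
    rewrite nth_take //; apply: leq_trans hV.
    apply: (sorted_leq_nth leq_trans leqnn 0 ss); rewrite ?inE; lia.
  rewrite all_count => /eqP ->; rewrite size_take.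
  by move: js; rewrite leq_eqVlt => /orP [/eqP ->|->]; rewrite ?ltnn.
by rewrite leq_addr.
Qed.

Lemma bal_low n (pi : perm_seq n) : balanced pi ->
  forall t i j, 1 <= t <= n -> 1 <= j <= t ->
  j <= cnt pi i t (ceil_div (j * n) t).
Proof.
move=> hb t i j ht hj.
have := hb t ht i j hj; rewrite /Zth => h.
rewrite -count_Z -(count_sort leq).
apply: sorted_count.
- exact: (sort_sorted leq_total).
- rewrite size_sort size_Z; lia.
- exact: h.
Qed.

Lemma sum_cnt n (pi : perm_seq n) t V : t <= n -> V <= n ->
  \sum_(i : 'I_n) cnt pi i t V = t * V.
Proof.
move=> ht hV; rewrite /cnt exchange_big /=.
transitivity (\sum_(d : 'I_n) ((d < t) : nat) * V).
  apply: eq_bigr => d _.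
  case: (d < t) => /=; last by rewrite big1.
  rewrite mul1n -[RHS](_ : minn n V = V); last lia.
  rewrite -sum_lt; symmetry.
  exact: (reindex_inj (h:=pi d) (P:=predT) (F:=fun x : 'I_n => (x<V):nat) perm_inj).
by rewrite -big_distrl /= sum_lt; congr (_ * _); lia.
Qed.

Lemma bad_bound n (S : 'I_n -> nat) j T :
  (forall i, j <= S i) -> \sum_i S i = T ->
  \sum_i ((j < S i) : nat) <= T - n * j.
Proof.
move=> hj hS.
have : \sum_(i : 'I_n) (j + (j < S i)) <= T.
  rewrite -hS; apply: leq_sum => i _; have := hj i; case: ltnP => /=; lia.
rewrite big_split /= sum_nat_const card_ord; lia.
Qed.

Lemma cnt_mono n (pi : perm_seq n) i t V V' : V <= V' ->
  cnt pi i t V <= cnt pi i t V'.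
Proof.
move=> h; apply: leq_sum => d _.
case: (d < t) => //=; case: ltnP => // h1; have -> : pi d i < V' by lia.
by [].
Qed.

Lemma cnt_step n (pi : perm_seq n) i t V (H : t < n) :
  cnt pi i t.+1 V = cnt pi i t V + (pi (Ordinal H) i < V).
Proof.
rewrite /cnt.
transitivity (\sum_(d : 'I_n) (((d < t) && (pi d i < V) : nat)
               + ((d == Ordinal H) && (pi d i < V) : nat))).
  apply: eq_bigr => d _.
  have -> : (d == Ordinal H) = (val d == t) by [].
  rewrite ltnS leq_eqVlt; case: eqP => [->|_] /=; rewrite ?ltnn //.
  by rewrite addn0.
rewrite big_split /=; congr (_ + _).
rewrite (bigD1 (Ordinal H)) //= eqxx /= big1 ?addn0 // => d /negbTE ->.
by [].
Qed.

Lemma sum_perm_lt n (p : {perm 'I_n}) V :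
  \sum_(i : 'I_n) ((p i < V) : nat) = minn n V.
Proof.
rewrite -sum_lt; symmetry.
exact: (reindex_inj (h:=p) (P:=predT) (F:=fun x : 'I_n => (x<V):nat) perm_inj).
Qed.

Lemma no_balanced n : 61 < n -> forall pi : perm_seq n, ~ balanced pi.
Proof.
move=> hn pi hb.
have h2 : 2 < n by lia.
have h3 : 3 < n by lia.
set V4 := ceil_div (1 * n) 4.
set V3 := ceil_div (1 * n) 3.
set V2 := ceil_div (1 * n) 2.
set W := ceil_div (2 * n) 4.
have eV4 : V4 = (1 * n + 3) %/ 4 by [].
have eV3 : V3 = (1 * n + 2) %/ 3 by [].
have eV2 : V2 = (1 * n + 1) %/ 2 by [].
have eW : W = (2 * n + 3) %/ 4 by [].
have le43 : V4 <= V3 by lia.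
have le2W : V2 <= W by lia.
have le3W : V3 <= W by lia.
have hWn : W <= n by lia.
have hV3n : V3 <= n by lia.
pose B i := ((V4 <= pi (Ordinal h2) i) && (pi (Ordinal h2) i < V3) : nat).
have sumB : \sum_i B i = V3 - V4.
  have : \sum_(i : 'I_n) ((pi (Ordinal h2) i < V3) : nat) =
         \sum_(i : 'I_n) ((pi (Ordinal h2) i < V4) : nat) + \sum_i B i.
    rewrite -big_split /=; apply: eq_bigr => i _; rewrite /B.
    case: (ltnP (pi (Ordinal h2) i) V4) => h;
      case: (ltnP (pi (Ordinal h2) i) V3) => h' /=; lia.
  rewrite !sum_perm_lt; lia.
have pw : forall i, B i <= ((1 < cnt pi i 3 V3) : nat) + ((2 < cnt pi i 4 W) : nat).
  move=> i; rewrite /B.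
  have s3 := fun V => cnt_step pi i V h2.
  have s4 := fun V => cnt_step pi i V h3.
  have l21 := bal_low hb i (t:=2) (j:=1) ltac:(lia) ltac:(lia).
  have l41 := bal_low hb i (t:=4) (j:=1) ltac:(lia) ltac:(lia).
  have m1 := cnt_mono pi i 2 le43.
  have m2 := cnt_mono pi i 2 le2W.
  have a3 := s3 V3. have a4 := s3 V4. have aW := s3 W.
  have b4 := s4 V4. have bW := s4 W.
  rewrite -/V2 in l21; rewrite -/V4 in l41.
  move: a3 a4 aW b4 bW.
  set y := val (pi (Ordinal h2) i).
  set z := val (pi (Ordinal h3) i).
  case: (ltnP y V4) => hy4 /=; first by move=> *.
  case: (ltnP y V3) => hy3 //=.
  have -> : y < W by lia.
  case: (ltnP z V4) => hz4; case: (ltnP z W) => hzW;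
   case: (ltnP 1 (cnt pi i 3 V3)); case: (ltnP 2 (cnt pi i 4 W)); simpl; lia.
have bad3 : \sum_i ((1 < cnt pi i 3 V3) : nat) <= 3 * V3 - n * 1.
  apply: bad_bound; last exact: sum_cnt.
  by move=> i; apply: (bal_low hb i (t:=3) (j:=1)); lia.
have bad4 : \sum_i ((2 < cnt pi i 4 W) : nat) <= 4 * W - n * 2.
  apply: bad_bound; last exact: sum_cnt.
  by move=> i; apply: (bal_low hb i (t:=4) (j:=2)); lia.
have : \sum_i B i <= \sum_i ((1 < cnt pi i 3 V3) : nat) +
                     \sum_i ((2 < cnt pi i 4 W) : nat).
  by rewrite -big_split; apply: leq_sum => i _; exact: pw.
rewrite sumB; lia.
Qed.

Theorem mainTheorem4 :
  (forall n : nat, 61 < n -> forall pi : perm_seq n, ~ balanced pi) /\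
  (exists B : nat, forall n : nat, 0 < n ->
     (exists pi : perm_seq n, balanced pi) -> n <= B).
Proof.
split; first exact: no_balanced.
exists 61 => n _ [pi hb].
case: (leqP n 61) => // h; exfalso; exact: (no_balanced h hb).
Qed.
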